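(* Let $P=\{p_1,\dots,p_k\}$ be an ordered family of real polynomials. Then there exists a polynomial $p\in P$ such that, for all except at most one value of $h\in\mathbb{Z}$, the family $(p,h)^*P$ has type strictly smaller than the type of $P$, and the polynomial $p_1(t+h)-p(t)$ is its leading polynomial (i.e. belongs to $(p,h)^*P$ and has maximal degree in it).
   Context: A family $\{p_1,\dots,p_k\}$ of real polynomials is ordered if $\deg p_1\ge\deg p_2\ge\dots\ge\deg p_k$; then $p_1$ is its leading polynomial. The van der Corput operation: for a polynomial $p$ and $h\in\mathbb{Z}$, $(p,h)^*P$ is the family $\{p_1(t+h)-p(t),\dots,p_k(t+h)-p(t),\,p_1(t)-p(t),\dots,p_k(t)-p(t)\}$ with the polynomials of degree $0$ removed. The type of a family is $(d,w_d,\dots,w_1)$, where $d$ is the largest degree of its members and $w_i$ is the number of distinct leading coefficients among members of degree exactly $i$. Types are ordered first by $d$ and then, for equal $d$, lexicographically in $(w_d,\dots,w_1)$. *)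

(* Defs.v *)
From HB Require Import structures.
From mathcomp Require Import all_boot all_order all_algebra.
From mathcomp Require Import reals.
Set Implicit Arguments. Unset Strict Implicit. Unset Printing Implicit Defensive.
Import Order.TTheory GRing.Theory Num.Theory.
Local Open Scope ring_scope.

Section PET.
Variable R : realType.

(* degree of a polynomial; constants (including 0) have degree 0 *)
Definition pdeg (p : {poly R}) : nat := (size p).-1.

Definition ordered_fam (P : seq {poly R}) : bool :=
  sorted (fun p q => pdeg q <= pdeg p)%N P.

Definition pshift (p : {poly R}) (h : int) : {poly R} :=
  p \Po ('X + (h%:~R)%:P).

Definition vdC (p : {poly R}) (h : int) (P : seq {poly R}) : seq {poly R} :=
  [seq q <- [seq pshift q h - p | q <- P] ++ [seq q - p | q <- P]
     | pdeg q != 0%N].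

Definition fam_deg (P : seq {poly R}) : nat := \max_(q <- P) pdeg q.

Definition fam_w (P : seq {poly R}) (i : nat) : nat :=
  size (undup [seq lead_coef q | q <- P & pdeg q == i]).

Definition fam_ws (P : seq {poly R}) : seq nat :=
  [seq fam_w P i | i <- rev (iota 1 (fam_deg P))].

Definition fam_type (P : seq {poly R}) : seq nat := fam_deg P :: fam_ws P.

End PET.

Fixpoint lex_lt (s t : seq nat) : bool :=
  match s, t with
  | x :: s', y :: t' => (x < y)%N || ((x == y) && lex_lt s' t')
  | [::], _ :: _ => true
  | _, _ => false
  end.

Definition type_lt (R : realType) (P Q : seq {poly R}) : bool :=
  (fam_deg P < fam_deg Q)%N ||
  ((fam_deg P == fam_deg Q) && lex_lt (fam_ws P) (fam_ws Q)).

(* Main.v *)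
Require Import Defs.
From HB Require Import structures.
From mathcomp Require Import all_boot all_order all_algebra.
From mathcomp Require Import reals zify.
Import Order.TTheory GRing.Theory Num.Theory.
Local Open Scope ring_scope.

Section Poly.
Variable R : realType.
Implicit Types (p q a b r : {poly R}) (c : R).

Lemma size_sh c q : size (q \Po ('X + c%:P)) = size q.
Proof. by rewrite size_comp_poly2 // size_XaddC. Qed.

Lemma lead_sh c q : lead_coef (q \Po ('X + c%:P)) = lead_coef q.
Proof.
by rewrite lead_coef_comp ?size_XaddC // (eqP (monicXaddC c)) expr1n mulr1.
Qed.

Lemma coef_sh_top c q n : (size q <= n.+1)%N -> (q \Po ('X + c%:P))`_n = q`_n.
Proof.
move=> hs; have [e|lt] := eqVneq (size q) n.+1.
  have := lead_sh c q; rewrite !lead_coefE size_sh e /=. done.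
have lt' : (size q <= n)%N by rewrite -ltnS ltn_neqAle lt hs.
have /leq_sizeP h1 := lt'.
have : (size (q \Po ('X + c%:P)) <= n)%N by rewrite size_sh.
by move/leq_sizeP => h2; rewrite h1 // h2.
Qed.

Lemma coef_XaddC_exp c n : (('X + c%:P) ^+ n.+1)`_n = n.+1%:R * c.
Proof.
elim: n => [|n IH]; first by rewrite expr1 coefD coefX coefC /= add0r mul1r.
rewrite exprS mulrC mulrDr coefD coefMX /= coefMC IH.
have hs : size (('X + c%:P) ^+ n.+1) = n.+2.
  have := size_exp ('X + c%:P) n.+1; rewrite size_XaddC /= mul1n.
  have : ('X + c%:P) ^+ n.+1 != 0 by rewrite monic_neq0 // monic_exp // monicXaddC.
  rewrite -size_poly_gt0; by case: (size _) => //= m _ ->.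
have := lead_coef_exp ('X + c%:P) n.+1; rewrite (eqP (monicXaddC c)) expr1n lead_coefE hs /= => ->.
rewrite mul1r -[n.+2]addn1 natrD mulrDl mul1r. done.
Qed.

Lemma sub_le a b : (size (a - b)%R <= maxn (size a) (size b))%N.
Proof. by rewrite -(size_polyN b) size_polyD. Qed.

Lemma sub_big a b : (size b < size a)%N -> size (a - b) = size a /\ lead_coef (a - b) = lead_coef a.
Proof.
move=> h; split; first by rewrite size_polyDl // size_polyN.
by rewrite lead_coefDl // size_polyN.
Qed.

Lemma sub_same a b : size a = size b -> lead_coef a = lead_coef b -> (0 < size a)%N ->
  (size (a - b)%R < size a)%N.
Proof.
move=> hs hl h0; have hle := sub_le a b; rewrite -hs maxnn in hle.
have hc : (a - b)`_(size a).-1 = 0.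
  by rewrite coefB; move: hl; rewrite !lead_coefE -hs => ->; exact: subrr.
have : (size (a - b)%R <= (size a).-1)%N.
  apply/leq_sizeP => j hj; case: (ltngtP j (size a).-1) hj => // [hjn _|-> _] //.
  by move/leq_sizeP: hle; apply; move: hjn h0; case: (size a).
by move: h0; case: (size a).
Qed.

Lemma sub_diff a b : size a = size b -> lead_coef a != lead_coef b ->
  size (a - b) = size a /\ lead_coef (a - b) = lead_coef a - lead_coef b.
Proof.
move=> hs hl.
have hc : (a - b)`_(size a).-1 = lead_coef a - lead_coef b by rewrite coefB !lead_coefE hs.
have hle := sub_le a b; rewrite -hs maxnn in hle.
have hne : (a - b)`_(size a).-1 != 0 by rewrite hc subr_eq0.
have hge : ((size a).-1 < size (a - b)%R)%N.
  by rewrite ltnNge; apply/negP => /leq_sizeP /(_ _ (leqnn _)) /eqP; rewrite (negbTE hne).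
have e : size (a - b) = size a by apply/eqP; rewrite eqn_leq hle /=; move: hge; case: (size a).
by split => //; rewrite lead_coefE e hc.
Qed.

Lemma comp_Xn n p : 'X^n \Po p = p ^+ n.
Proof. by elim: n => [|n IH]; rewrite ?expr0 ?comp_polyC // !exprS comp_polyM comp_polyX IH. Qed.

Lemma coef_gt_size p i : p`_i != 0 -> (i < size p)%N.
Proof. by move=> h; rewrite ltnNge; apply/negP => /leq_sizeP /(_ _ (leqnn _)) /eqP; rewrite (negbTE h). Qed.

Lemma shift_diff c q d : size q = d.+2 -> c != 0 -> size (q \Po ('X + c%:P) - q) = d.+1.
Proof.
move=> hs hc.
set a := lead_coef q.
have ha : a != 0 by rewrite lead_coef_eq0 -size_poly_gt0 hs.
set r := q - a *: 'X^(d.+1).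
have hr : (size r <= d.+1)%N.
  have := @sub_same q (a *: 'X^(d.+1)).
  rewrite size_scale // size_polyXn lead_coefZ lead_coefXn mulr1 hs; apply => //.
have eq : q = a *: 'X^(d.+1) + r by rewrite /r addrC subrK.
have hco : (q \Po ('X + c%:P) - q)`_d = a * (d.+1%:R * c).
  have e2 : q`_d = r`_d.
  by rewrite {1}eq coefD coefZ coefXn eqn_leq ltnn andbF mulr0 add0r.
  rewrite coefB e2 {1}eq comp_polyD comp_polyZ comp_Xn coefD coefZ coef_XaddC_exp coef_sh_top //.
  by rewrite addrK.
have hne : (q \Po ('X + c%:P) - q)`_d != 0.
  by rewrite hco mulf_neq0 // mulf_neq0 // pnatr_eq0.
have h1 := coef_gt_size _ _ hne.
have h2 := @sub_same (q \Po ('X + c%:P)) q; rewrite size_sh lead_sh hs in h2.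
have := h2 erefl erefl isT.
by move=> h3; apply/eqP; rewrite eqn_leq h1 andbT.
Qed.

End Poly.
Lemma rev_iota1S d : rev (iota 1 d.+1) = d.+1 :: rev (iota 1 d).
Proof. by rewrite -[d.+1]addn1 iotaD rev_cat /= addnC. Qed.

Lemma lex_map (f g : nat -> nat) m d : (1 <= m <= d)%N ->
  (forall i, (m < i <= d)%N -> f i = g i) -> (f m < g m)%N ->
  lex_lt (map f (rev (iota 1 d))) (map g (rev (iota 1 d))).
Proof.
elim: d => [|d IH]; first by lia.
move=> hm he hlt; rewrite rev_iota1S /=.
have [e|ne] := eqVneq m d.+1; first by rewrite -e hlt.
rewrite he; last by lia.
rewrite eqxx ltnn /=; apply: IH => //; first by lia.
move=> i hi; apply: he; lia.
Qed.

Section Fam.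
Variable R : realType.
Implicit Types (p q a b r : {poly R}) (P Q : seq {poly R}).

Lemma pdeg_size a : (0 < pdeg a)%N -> size a = (pdeg a).+1.
Proof. by rewrite /pdeg; case: (size a). Qed.

Lemma pdeg_sh q h : pdeg (pshift q h) = pdeg q.
Proof. by rewrite /pdeg /pshift size_sh. Qed.

Lemma lead_psh q h : lead_coef (pshift q h) = lead_coef q.
Proof. exact: lead_sh. Qed.

Lemma pdeg_sub_le a b : (pdeg (a - b) <= maxn (pdeg a) (pdeg b))%N.
Proof. rewrite /pdeg; have := @sub_le _ a b; lia. Qed.

Lemma pdeg_sub_big a b : (pdeg b < pdeg a)%N ->
  pdeg (a - b) = pdeg a /\ lead_coef (a - b) = lead_coef a.
Proof.
move=> h; have hs : (size b < size a)%N by move: h; rewrite /pdeg; lia.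
by have [e1 e2] := @sub_big _ a b hs; rewrite /pdeg e1 e2.
Qed.

Lemma pdeg_sub_diff a b : (0 < pdeg a)%N -> pdeg a = pdeg b -> lead_coef a != lead_coef b ->
  pdeg (a - b) = pdeg a /\ lead_coef (a - b) = lead_coef a - lead_coef b.
Proof.
move=> h0 he hl; have hs : size a = size b by rewrite pdeg_size // he pdeg_size // -he.
by have [e1 e2] := @sub_diff _ a b hs hl; rewrite /pdeg e1 e2.
Qed.

Lemma pdeg_sub_same a b : (0 < pdeg a)%N -> pdeg a = pdeg b -> lead_coef a = lead_coef b ->
  (pdeg (a - b) < pdeg a)%N.
Proof.
move=> h0 he hl; have hs : size a = size b by rewrite pdeg_size // he pdeg_size // -he.
have hp : (0 < size a)%N by rewrite pdeg_size.
have := @sub_same _ a b hs hl hp; move: h0; rewrite /pdeg; lia.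
Qed.

Lemma pdeg_shift_diff q h d : pdeg q = d.+1 -> h != 0 -> pdeg (pshift q h - q) = d.
Proof.
move=> hq hh; rewrite /pdeg /pshift (@shift_diff _ _ q d) //.
  by rewrite pdeg_size hq.
by rewrite intr_eq0.
Qed.

Lemma mem_vdC p h P r : r \in vdC p h P ->
  pdeg r != 0%N /\ exists2 q, q \in P & (r = pshift q h - p \/ r = q - p).
Proof.
rewrite mem_filter mem_cat => /andP [-> /orP [] /mapP [q hq ->]]; split => //; exists q; auto.
Qed.

Lemma vdC_mem1 p h P q : q \in P -> pdeg (pshift q h - p) != 0%N -> pshift q h - p \in vdC p h P.
Proof. by move=> hq hd; rewrite mem_filter hd mem_cat; apply/orP; left; apply/mapP; exists q. Qed.

Lemma vdC_mem2 p h P q : q \in P -> pdeg (q - p) != 0%N -> q - p \in vdC p h P.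
Proof. by move=> hq hd; rewrite mem_filter hd mem_cat; apply/orP; right; apply/mapP; exists q. Qed.

Lemma fam_deg_le Q n : (forall r, r \in Q -> pdeg r <= n)%N -> (fam_deg Q <= n)%N.
Proof. by move=> h; apply/bigmax_leqP_seq => i hi _; apply: h. Qed.

Lemma le_fam_deg Q r : r \in Q -> (pdeg r <= fam_deg Q)%N.
Proof. by move=> h; rewrite /fam_deg (@leq_bigmax_seq _ Q xpredT (fun q => pdeg q) r h). Qed.

Lemma mem_lcs Q i y : (y \in [seq lead_coef q | q <- Q & pdeg q == i]) =
  has (fun q => (pdeg q == i) && (y == lead_coef q)) Q.
Proof.
apply/idP/idP.
  by move=> /mapP [q]; rewrite mem_filter => /andP [hd hq] ->; apply/hasP; exists q; rewrite ?hd ?eqxx.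
by move=> /hasP [q hq /andP [hd /eqP ->]]; apply: map_f; rewrite mem_filter hd.
Qed.

Lemma fam_w_eq P Q i : [seq lead_coef q | q <- Q & pdeg q == i] =i
  [seq lead_coef q | q <- P & pdeg q == i] -> fam_w Q i = fam_w P i.
Proof.
move=> h; rewrite /fam_w; apply: perm_size; apply: uniq_perm; rewrite ?undup_uniq //.
by move=> y; rewrite !mem_undup h.
Qed.


Lemma vdC_inv p h P r : r \in vdC p h P ->
  pdeg r != 0%N /\ exists q s, [/\ q \in P, r = s - p, pdeg s = pdeg q & lead_coef s = lead_coef q].
Proof.
move=> /mem_vdC [hd [q hq [e|e]]]; split => //.
  by exists q, (pshift q h); rewrite pdeg_sh lead_psh.
by exists q, q.
Qed.

Lemma main12 P p p1 h d :
  p \in P -> p1 \in P -> pdeg p1 = d -> (0 < pdeg p)%N ->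
  (forall q, q \in P -> pdeg p <= pdeg q <= d)%N ->
  ((pdeg p < d)%N \/ lead_coef p != lead_coef p1) ->
  [/\ fam_deg P = d, fam_deg (vdC p h P) = d, pdeg (pshift p1 h - p) = d,
      pshift p1 h - p \in vdC p h P & lex_lt (fam_ws (vdC p h P)) (fam_ws P)].
Proof.
move=> hp hp1 hd1 hm0 hall hcase.
set m := pdeg p.
set Q := vdC p h P.
have hmd : (m <= d)%N by have /andP [] := hall _ hp1; rewrite hd1.
have hdP : fam_deg P = d.
  apply/eqP; rewrite eqn_leq; apply/andP; split.
    by apply: fam_deg_le => r /hall /andP [].
  by rewrite -hd1 le_fam_deg.
have hlead : pdeg (pshift p1 h - p) = d.
  have hsd : pdeg (pshift p1 h) = d by rewrite pdeg_sh.
  have [hc|hc] := ltnP m d.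
    have hlt : (pdeg p < pdeg (pshift p1 h))%N by rewrite hsd.
    by have [-> _] := @pdeg_sub_big (pshift p1 h) p hlt.
  have hmd' : m = d by apply/eqP; rewrite eqn_leq hmd hc.
  have hne : lead_coef p != lead_coef p1 by case: hcase => //; rewrite -/m hmd' ltnn.
  have h1 : (0 < pdeg (pshift p1 h))%N by rewrite hsd -hmd'.
  have h2 : pdeg (pshift p1 h) = pdeg p by rewrite hsd -hmd'.
  have h3 : lead_coef (pshift p1 h) != lead_coef p by rewrite lead_psh eq_sym.
  have [-> _] := @pdeg_sub_diff (pshift p1 h) p h1 h2 h3.
  exact: hsd.
have hmemQ : pshift p1 h - p \in Q by apply: vdC_mem1; rewrite // hlead; lia.
have hdQ : fam_deg Q = d.
  apply/eqP; rewrite eqn_leq; apply/andP; split; last by rewrite -{1}hlead le_fam_deg.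
  apply: fam_deg_le => r /vdC_inv [_ [q [s [hq -> hs _]]]].
  apply: leq_trans (pdeg_sub_le _ _) _; have /andP [_ hq'] := hall _ hq.
  by rewrite geq_max hs hq' hmd.
split => //.
rewrite /fam_ws hdP hdQ; apply: (@lex_map _ _ m); first by rewrite hm0 hmd.
  move=> i /andP [hmi hid]; apply: fam_w_eq => y; rewrite !mem_lcs.
  apply/hasP/hasP.
    move=> [r /vdC_inv [_ [q [s [hq -> hs hl]]]] /andP [/eqP hri /eqP ->]].
    exists q => //.
    have hms : (m <= pdeg s)%N by rewrite hs; have /andP [] := hall _ hq.
    have [lt|eq] : (m < pdeg s)%N \/ pdeg s = m by lia.
      have [e1 e2] := @pdeg_sub_big s p lt.
      by rewrite -hs -e1 hri e2 hl !eqxx.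
    exfalso; have := @pdeg_sub_le s p; rewrite eq maxnn hri /m; lia.
  move=> [q hq /andP [/eqP hqi /eqP ->]].
  have lt : (m < pdeg q)%N by rewrite hqi.
  have [e1 e2] := @pdeg_sub_big q p lt.
  exists (q - p); first by apply: vdC_mem2; rewrite // e1; lia.
  by rewrite e1 e2 hqi !eqxx.
set LP := undup [seq lead_coef q | q <- P & pdeg q == m].
have hpLP : lead_coef p \in LP by rewrite mem_undup mem_lcs; apply/hasP; exists p; rewrite ?eqxx.
rewrite /fam_w -/LP.
apply: (@leq_trans (size [seq x - lead_coef p | x <- rem (lead_coef p) LP]).+1).
  rewrite ltnS;  apply: uniq_leq_size; first exact: undup_uniq.
  move=> y; rewrite mem_undup mem_lcs => /hasP [r /vdC_inv [_ [q [s [hq er hs hl]]]] /andP [/eqP hri /eqP ->]].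
  have hms : (m <= pdeg s)%N by rewrite hs; have /andP [] := hall _ hq.
  have [lt|eq] : (m < pdeg s)%N \/ pdeg s = m by lia.
    by exfalso; have [e1 _] := @pdeg_sub_big s p lt; move: hri; rewrite er e1; lia.
  have [el|nl] := eqVneq (lead_coef s) (lead_coef p).
    by exfalso; have hh := @pdeg_sub_same s p; rewrite eq in hh; have := hh hm0 erefl el; rewrite -er hri ltnn.
  have h0s : (0 < pdeg s)%N by rewrite eq.
  have [_ e2] := @pdeg_sub_diff s p h0s eq nl.
  rewrite er e2; apply: map_f; rewrite mem_rem_uniq ?undup_uniq // inE nl /= hl mem_undup mem_lcs.
  by apply/hasP; exists q; rewrite // -hs eq !eqxx.
by rewrite size_map size_rem //; move: hpLP; case: LP.
Qed.


Lemma main3 P p1 h d : p1 \in P -> (0 < d)%N -> h != 0 ->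
  (forall q, q \in P -> pdeg q = d.+1 /\ lead_coef q = lead_coef p1) ->
  [/\ fam_deg P = d.+1, pdeg (pshift p1 h - p1) = d, pshift p1 h - p1 \in vdC p1 h P
   & forall r, r \in vdC p1 h P -> (pdeg r <= d)%N].
Proof.
move=> hp1 hd hh hall.
have [hd1 _] := hall _ hp1.
have hdP : fam_deg P = d.+1.
  apply/eqP; rewrite eqn_leq; apply/andP; split.
    by apply: fam_deg_le => r /hall [-> _].
  by rewrite -hd1 le_fam_deg.
have hlead : pdeg (pshift p1 h - p1) = d by apply: pdeg_shift_diff.
split => //.
  by apply: vdC_mem1; rewrite // hlead; lia.
move=> r /vdC_inv [_ [q [s [hq -> hs hl]]]].
have [hq1 hq2] := hall _ hq.
have : (pdeg (s - p1) < pdeg s)%N.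
  by apply: pdeg_sub_same; rewrite ?hs ?hq1 ?hd1 ?hl ?hq2.
by rewrite hs hq1 ltnS.
Qed.

Lemma ex_min_deg P : P != [::] -> exists2 p, p \in P & forall q, q \in P -> (pdeg p <= pdeg q)%N.
Proof.
elim: P => // a l IH _.
have [->|ne] := eqVneq l [::].
  by exists a; rewrite ?mem_head // => q; rewrite inE => /eqP ->.
have [b hb hmin] := IH ne.
have [le|lt] := leqP (pdeg a) (pdeg b).
  exists a; first exact: mem_head.
  move=> q; rewrite inE => /orP [/eqP -> //|/hmin]; exact: leq_trans.
exists b; first by rewrite inE hb orbT.
move=> q; rewrite inE => /orP [/eqP ->|/hmin //]; exact: ltnW.
Qed.

End Fam.

Theorem proposition4p7 (R : realType) (P : seq {poly R}) :
  ordered_fam P ->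
  P != [::] ->
  all (fun q => 0 < pdeg q)%N P ->
  fam_type P != [:: 1%N; 1%N] ->
  exists2 p, p \in P &
    exists h0 : int, forall h : int, h != h0 ->
      type_lt (vdC p h P) P /\
      pshift (head 0 P) h - p \in vdC p h P /\
      all (fun q => (pdeg q <= pdeg (pshift (head 0%R P) h - p))%N) (vdC p h P).
Proof.
move=> hord hne hpos htype.
have hpos' : forall q, q \in P -> (0 < pdeg q)%N by move=> q hq; exact: (allP hpos).
case: P hord hne hpos hpos' htype => [//|p1 P'] hord _ _ hpos htype /=.
set P := p1 :: P'.
have hp1 : p1 \in P by exact: mem_head.
set d := pdeg p1.
have hmax : forall q, q \in P -> (pdeg q <= d)%N.
  have tr : transitive (fun p q : {poly R} => pdeg q <= pdeg p)%N.
    by move=> y x z h1 h2; exact: leq_trans h2 h1.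
  have /allP h := order_path_min tr hord.
  by move=> q; rewrite inE => /orP [/eqP ->|/h].
have fin12 : forall p, p \in P -> (0 < pdeg p)%N ->
    (forall q, q \in P -> pdeg p <= pdeg q <= d)%N ->
    ((pdeg p < d)%N \/ lead_coef p != lead_coef p1) ->
  exists2 p, p \in P &
    exists h0 : int, forall h : int, h != h0 ->
      type_lt (vdC p h P) P /\
      pshift p1 h - p \in vdC p h P /\
      all (fun q => (pdeg q <= pdeg (pshift p1 h - p))%N) (vdC p h P).
  move=> p hp hp0 hall hcase; exists p => //; exists 0 => h _.
  have [hdP hdQ hl hm hlex] := @main12 R P p p1 h d hp hp1 erefl hp0 hall hcase.
  split; first by rewrite /type_lt hdP hdQ eqxx hlex orbT.
  split => //; apply/allP => r hr; rewrite hl -/d -hdQ; exact: le_fam_deg.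
have [pm hpm hmin] := @ex_min_deg R P isT.
have [lt|ge] := ltnP (pdeg pm) d.
  apply: (fin12 pm) => //; [exact: hpos | | by left].
  by move=> q hq; rewrite hmin // hmax.
have hallD : forall q, q \in P -> pdeg q = d.
  move=> q hq; apply/eqP; rewrite eqn_leq hmax //=; exact: leq_trans ge (hmin _ hq).
have [/hasP [q hq hlq]|hsame] := boolP (has (fun q => lead_coef q != lead_coef p1) P) ; last first.
  have hl : forall q, q \in P -> lead_coef q = lead_coef p1.
    by move=> q hq; apply/eqP; apply: contraNT hsame => hn; apply/hasP; exists q.
  have hdP : fam_deg P = d.
    apply/eqP; rewrite eqn_leq; apply/andP; split; first by apply: fam_deg_le.
    exact: le_fam_deg.
  have hd0 : (0 < d)%N by apply: hpos.
  have [d' hd'] : exists d', d = d'.+1 by exists d.-1; lia.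
  have hd'0 : (0 < d')%N.
    case: d' hd' => // hd1; exfalso; move/negP: htype; apply.
    rewrite /fam_type /fam_ws -/P hdP hd1 /=; apply/eqP; congr (_ :: _ :: _).
    rewrite /fam_w; have -> : 1%N = size [:: lead_coef p1] by [].
    apply: perm_size; apply: uniq_perm; rewrite ?undup_uniq //.
    move=> y; rewrite mem_undup mem_lcs inE; apply/hasP/eqP.
      by move=> [q hq /andP [_ /eqP ->]]; exact: hl.
    by move=> ->; exists p1; rewrite // eqxx hallD // -/d hd1.
  exists p1 => //; exists 0 => h hh.
  have hall3 : forall q, q \in P -> pdeg q = d'.+1 /\ lead_coef q = lead_coef p1.
    by move=> q hq; rewrite hallD // hl.
  have [hdP' hlead hm hle] := @main3 R P p1 h d' hp1 hd'0 hh hall3.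
  split.
    rewrite /type_lt hdP'; apply/orP; left; rewrite ltnS; exact: fam_deg_le.
  by split => //; apply/allP => r hr; rewrite hlead; exact: hle.
apply: (fin12 q) => //; first exact: hpos.
  by move=> q' hq'; rewrite !hallD // leqnn.
by right.
Qed.
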